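(* Let $1\le k\le n$ be integers and $f:\mathbb{F}_2^n\to\mathbb{F}_2$ a Boolean function. Then \[\mathrm{dt}_k(f)=\mathrm{add}_k(f)\prod_{i=n-k+1}^{n}\Big(1-\frac{1}{2^i}\Big).\] Equivalently, $\mathrm{add}_k(f)$ equals the proportion, among all tuples $(u_0,u_1,\dots,u_k)\in(\mathbb{F}_2^n)^{k+1}$ with $u_1,\dots,u_k$ linearly independent, of those for which $\bigoplus_{c_1,\dots,c_k\in\mathbb{F}_2} f\big((\bigoplus_{i=1}^k c_iu_i)\oplus u_0\big)\neq 0$.
   Context: $\oplus$ denotes addition in $\mathbb{F}_2$ and $\mathbb{F}_2^n$. Every Boolean function $f:\mathbb{F}_2^n\to\mathbb{F}_2$ has a unique algebraic normal form (ANF): a polynomial over $\mathbb{F}_2$ in $x_1,\dots,x_n$ of degree at most one in each variable whose polynomial function is $f$. For $1\le k\le n$, define \[\mathrm{dt}_k(f)=\frac{\big|\{(u_0,\dots,u_k)\in(\mathbb{F}_2^n)^{k+1}:\ \bigoplus_{c_1,\dots,c_k\in\mathbb{F}_2} f\big((\bigoplus_{i=1}^k c_iu_i)\oplus u_0\big)\neq0\}\big|}{2^{(k+1)n}}.\] For $M\in GL(n,\mathbb{F}_2)$, $v\in\mathbb{F}_2^n$, let $\varphi_{M,v}(x)=Mx\oplus v$. The degree-$k$ monomial density $\mathrm{dd}_k(f)$ is the number of monomials of degree $k$ having nonzero coefficient in the ANF of $f$ divided by $\binom{n}{k}$. The average degree-$k$ monomial density is \[\mathrm{add}_k(f)=\frac{\sum_{M\in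 GL(n,\mathbb{F}_2),\,v\in\mathbb{F}_2^n}\mathrm{dd}_k(f\circ\varphi_{M,v})}{2^n(2^n-1)(2^n-2)\cdots(2^n-2^{n-1})}.\] *)

(* Defs.v *)
From HB Require Import structures.
From mathcomp Require Import all_boot all_order all_algebra all_fingroup.
Set Implicit Arguments. Unset Strict Implicit. Unset Printing Implicit Defensive.
Import GRing.Theory.
Local Open Scope ring_scope.

Notation vec n := 'cV['F_2]_n.

(* Polynomial function on F_2^n of a polynomial of degree <= 1 in each
   variable, given by its coefficient function a : subsets S of variables
   (monomial prod_{i in S} x_i) -> F_2. *)
Definition anf_eval n (a : {ffun {set 'I_n} -> 'F_2}) (x : vec n) : 'F_2 :=
  \sum_(S : {set 'I_n}) a S * \prod_(i in S) x i 0.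

Definition anf n (f : vec n -> 'F_2) : {ffun {set 'I_n} -> 'F_2} :=
  odflt [ffun _ => 0]
    [pick a : {ffun {set 'I_n} -> 'F_2} | [forall x, anf_eval a x == f x]].

Definition dd_k n (k : nat) (f : vec n -> 'F_2) : rat :=
  #|[set S : {set 'I_n} | (#|S| == k) && (anf f S != 0)]|%:R / ('C(n, k))%:R.

Definition phi n (M : 'M['F_2]_n) (v : vec n) (x : vec n) : vec n := M *m x + v.

Definition add_k n (k : nat) (f : vec n -> 'F_2) : rat :=
  (\sum_(M : 'M['F_2]_n | M \in unitmx) \sum_(v : vec n) dd_k k (f \o phi M v))
  / ((2 ^ n)%:R * \prod_(i < n) ((2 ^ n)%:R - (2 ^ i)%:R)).

(* k-th order derivative of f at u_0 in directions u_1..u_k, for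
   u : 'I_(k+1) -> F_2^n (u ord0 = u_0, u (lift ord0 i) = u_(i+1)). *)
Definition kderiv n k (f : vec n -> 'F_2) (u : {ffun 'I_k.+1 -> vec n}) : 'F_2 :=
  \sum_(c : {ffun 'I_k -> 'F_2})
     f ((\sum_(i < k) c i *: u (lift ord0 i)) + u ord0).

Definition dt_k n (k : nat) (f : vec n -> 'F_2) : rat :=
  #|[set u : {ffun 'I_k.+1 -> vec n} | kderiv f u != 0]|%:R
  / (2 ^ (k.+1 * n))%:R.

Definition dirs_free n k (u : {ffun 'I_k.+1 -> vec n}) : bool :=
  row_free (\matrix_(i < k) (u (lift ord0 i))^T).

(* Main.v *)
Require Import Defs.
From mathcomp Require Import all_boot all_order all_algebra all_fingroup.
From mathcomp Require Import ring.
Set Implicit Arguments. Unset Strict Implicit. Unset Printing Implicit Defensive.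
Import GRing.Theory Num.Theory.
Local Open Scope ring_scope.

Lemma free_pid (F : fieldType) k n (A : 'M[F]_(k, n)) : (k <= n)%N -> row_free A ->
  exists2 R : 'M[F]_n, R \in unitmx & A = pid_mx k *m R.
Proof.
move=> kn /eqP rA.
set L := col_ebase A; set U := row_ebase A.
have Lu : L \in unitmx by apply: col_ebase_unit.
pose P1 : 'M[F]_(k, n) := pid_mx k.
pose P2 : 'M[F]_(n, k) := pid_mx k.
have P12 : P1 *m P2 = 1%:M by rewrite pid_mx_id // pid_mx_1.
have P21 : P2 *m P1 = pid_mx k by rewrite pid_mx_id.
have P1C : P1 *m copid_mx k = 0 by rewrite mul_pid_mx_copid.
have CP2 : copid_mx k *m P2 = 0 by rewrite mul_copid_mx_pid.
have CC : copid_mx k *m copid_mx k = copid_mx k :> 'M[F]_n by rewrite copid_mx_id.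
have PC : pid_mx k + copid_mx k = 1%:M :> 'M[F]_n by rewrite /copid_mx addrC subrK.
move: P1C CP2 CC PC; set C := copid_mx k => P1C CP2 CC PC.
have CE : C = copid_mx k by [].
clearbody C.
pose X := P2 *m L *m P1 + C.
pose Y := P2 *m invmx L *m P1 + C.
have XY : X *m Y = 1%:M.
  rewrite /X /Y mulmxDl !mulmxDr.
  rewrite !mulmxA -[P2 *m L *m P1 *m P2](mulmxA) P12 mulmx1.
  rewrite -(mulmxA P2 L) mulmxV // mulmx1 P21.
  idtac.

  rewrite -(mulmxA _ P1) P1C mulmx0 CP2 !mul0mx addr0 add0r CC //.
have [Xu _] := mulmx1_unit XY.
exists (X *m U); first by rewrite unitmx_mul Xu row_ebase_unit.
rewrite -{1}(mulmx_ebase A) rA -/L -/U mulmxA; congr (_ *m _).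
rewrite /X mulmxDr CE mul_pid_mx_copid // addr0.
by rewrite !mulmxA P12 mul1mx.
Qed.

Lemma free_trans (F : fieldType) k n (A B : 'M[F]_(k, n)) : (k <= n)%N ->
  row_free A -> row_free B -> exists2 R : 'M[F]_n, R \in unitmx & A *m R = B.
Proof.
move=> kn fA fB; have [R1 u1 ->] := free_pid kn fA; have [R2 u2 ->] := free_pid kn fB.
exists (invmx R1 *m R2); first by rewrite unitmx_mul unitmx_inv u1.
by rewrite -mulmxA (mulmxA R1) mulmxV // mul1mx.
Qed.

Lemma card_free (F : finFieldType) m n : (m <= n)%N ->
  #|[pred A : 'M[F]_(m, n) | \rank A == m]| = (\prod_(i < m) (#|F| ^ n - #|F| ^ i))%N.
Proof.
set p := #|F|.
pose fr m := [pred A : 'M[F]_(m, n) | \rank A == m].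
rewrite -/(fr m).
elim: m => [_ | m IHm /ltnW-le_mn].
  rewrite (@eq_card1 _ (0 : 'M_(0, n))) ?big_ord0 //= => A.
  by rewrite flatmx0 !inE mxrank.unlock !eqxx.
rewrite big_ord_recr /= -IHm //.
rewrite -sum_nat_const /= -sum1_card -add1n.
rewrite (partition_big dsubmx (fr m)) /= => [|A]; last first.
  rewrite !inE -{1}(vsubmxK A); move: {A}(_ A) (_ A) => Ad Au Afull.
  rewrite eqn_leq rank_leq_row -(leq_add2l (\rank Au)) -mxrank_sum_cap.
  rewrite {1 3}[@mxrank]lock addsmxE (eqnP Afull) -lock -addnA.
  by rewrite leq_add ?rank_leq_row ?leq_addr.
apply: eq_bigr => A rAm; rewrite (reindex (col_mx^~ A)) /=; last first.
  exists usubmx => [v _ | vA]; first by rewrite col_mxKu.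
  by case/andP=> _ /eqP <-; rewrite vsubmxK.
transitivity #|~: [set v *m A | v in 'rV_m]|; last first.
  rewrite cardsCs setCK card_imset ?card_mx ?card_ord ?mul1n //.
  have [B AB1] := row_freeP rAm; apply: can_inj (mulmx^~ B) _ => v.
  by rewrite -mulmxA AB1 mulmx1.
rewrite -sum1_card; apply: eq_bigl => v; rewrite !inE col_mxKd eqxx.
rewrite andbT eqn_leq rank_leq_row /= -(leq_add2r (\rank (v :&: A)%MS)).
rewrite -addsmxE mxrank_sum_cap (eqnP rAm) addnAC leq_add2r.
rewrite (ltn_leqif (mxrank_leqif_sup _)) ?capmxSl // sub_capmx submx_refl.
by congr (~~ _); apply/submxP/imsetP=> [] [u]; exists u.
Qed.

Lemma F2_01 (x : 'F_2) : x = (x != 0)%:R.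
Proof. by case: x => [[|[|//]]] ?; apply/val_inj. Qed.

Lemma two0 : 2%:R = 0 :> 'F_2.
Proof. by apply/val_inj. Qed.

Lemma expn2_F2 m : (2 ^ m)%:R = (m == 0)%:R :> 'F_2.
Proof. by case: m => [|m]//; rewrite expnS natrM two0 mul0r. Qed.

Definition vset n (R : {set 'I_n}) : vec n := \col_i (i \in R)%:R.
Definition mob n (g : vec n -> 'F_2) (S : {set 'I_n}) : 'F_2 :=
  \sum_(R : {set 'I_n} | R \subset S) g (vset R).

Lemma prod_vset n (T R : {set 'I_n}) : \prod_(i in T) vset R i 0 = (T \subset R)%:R.
Proof.
case: (boolP (T \subset R)) => H.
  by rewrite big1 // => i iT; rewrite mxE (subsetP H i iT).
have [i iT niR] := subsetPn H.
by rewrite (bigD1 i) //= mxE (negPf niR) mul0r.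
Qed.

Lemma count_between n (T S : {set 'I_n}) :
  \sum_(R : {set 'I_n} | R \subset S) ((T \subset R)%:R : 'F_2) = (T == S)%:R.
Proof.
transitivity ((#|[set R : {set 'I_n} | (R \subset S) && (T \subset R)]|)%:R : 'F_2).
  rewrite -sum1_card natr_sum big_mkcond /= [RHS]big_mkcond /=.
  by apply: eq_bigr => R _; rewrite inE; case: (R \subset S); case: (T \subset R).
case: (boolP (T \subset S)) => TS; last first.
  rewrite (_ : [set _ | _] = set0) ?cards0; last first.
    apply/setP => R; rewrite !inE; apply/negP => /andP[RS TR].
    by move/negP: TS; apply; apply: subset_trans RS.
  case: eqP => // E; by move: TS; rewrite E subxx.
have -> : [set R : {set 'I_n} | (R \subset S) && (T \subset R)] =
    (fun X => X :|: T) @: powerset (S :\: T).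
  apply/setP => R; rewrite inE; apply/idP/imsetP.
    move=> /andP[RS TR]; exists (R :\: T); first by rewrite inE setSD.
    by apply/setP=> x; rewrite !inE; case: (boolP (x \in T)) => xT; rewrite ?(subsetP TR x xT) ?orbT ?orbF.
  move=> [X]; rewrite inE => XST ->; rewrite subsetUr andbT subUset TS andbT.
  by apply: subset_trans XST (subsetDl _ _).
rewrite card_in_imset ?card_powerset ?expn2_F2.
  by rewrite cards_eq0 setD_eq0 eqEsubset TS.
move=> X Y; rewrite !inE => XST YST E.
have dX : X :\: T = X.
  apply/setP => x; rewrite !inE; case: (boolP (x \in X)) => xX; rewrite ?andbF ?andbT //.
  by have := subsetP XST x xX; rewrite inE => /andP[].

have dY : Y :\: T = Y.
  apply/setP => x; rewrite !inE; case: (boolP (x \in Y)) => xX; rewrite ?andbF ?andbT //.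
  by have := subsetP YST x xX; rewrite inE => /andP[].

by rewrite -dX -dY; have := congr1 (fun Z => Z :\: T) E; rewrite !setDUl setDv !setU0.
Qed.

Lemma mob_anf n (a : {ffun {set 'I_n} -> 'F_2}) S : mob (anf_eval a) S = a S.
Proof.
rewrite /mob /anf_eval.
under eq_bigr do under eq_bigr do rewrite prod_vset.
rewrite exchange_big /=.
under eq_bigr do rewrite -mulr_sumr count_between.
rewrite (bigD1 S) //= eqxx mulr1 big1 ?addr0 // => T /negPf->; by rewrite mulr0.
Qed.

Lemma anf_surj n (g : vec n -> 'F_2) : exists a, forall x, anf_eval a x = g x.
Proof.
pose h (a : {ffun {set 'I_n} -> 'F_2}) : {ffun vec n -> 'F_2} := [ffun x => anf_eval a x].
have hinj : injective h.
  move=> a b eq; apply/ffunP => S; rewrite -mob_anf -(mob_anf b) /mob.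
  by apply: eq_bigr => R _; have := congr1 (fun f : {ffun vec n -> _} => f (vset R)) eq; rewrite !ffunE.
have : [ffun x => g x] \in codom h.
  apply: (inj_card_onto hinj).
  rewrite !card_ffun card_mx !card_ord -(@cardsT {set 'I_n}) -powersetT card_powerset cardsT card_ord.
  by rewrite muln1.
case/codomP => a ha; exists a => x.
by have := congr1 (fun f : {ffun vec n -> _} => f x) ha; rewrite !ffunE.
Qed.

Lemma anfE n (g : vec n -> 'F_2) : anf g = [ffun S => mob g S].
Proof.
rewrite /anf; case: pickP => [a /forallP /= H | H] /=.
  apply/ffunP => S; rewrite ffunE -mob_anf; apply: eq_bigr => R _; exact/eqP/H.
exfalso; have [a Ha] := anf_surj g; move: (H a) => /negbT/forallPn [x].
by rewrite Ha eqxx.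
Qed.

Definition tup n k (M : 'M['F_2]_n) (v : vec n) (s : 'I_k -> 'I_n) :
  {ffun 'I_k.+1 -> vec n} :=
  [ffun j => if unlift ord0 j is Some i then col (s i) M else v].

Lemma tup0 n k M v (s : 'I_k -> 'I_n) : tup M v s ord0 = v.
Proof. by rewrite ffunE unlift_none. Qed.

Lemma tupS n k M v (s : 'I_k -> 'I_n) i : tup M v s (lift ord0 i) = col (s i) M.
Proof. by rewrite ffunE liftK. Qed.

Lemma mob_phi n k (f : vec n -> 'F_2) M v (s : 'I_k -> 'I_n) :
  injective s -> mob (f \o phi M v) [set s i | i : 'I_k] = kderiv f (tup M v s).
Proof.
move=> sinj; rewrite /mob /kderiv.
pose h (c : {ffun 'I_k -> 'F_2}) : {set 'I_n} := s @: [set i | c i != 0].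
pose h' (R : {set 'I_n}) : {ffun 'I_k -> 'F_2} := [ffun i => (s i \in R)%:R].
rewrite (reindex h) /=; last first.
  exists h' => [c _ | R]; last rewrite inE => RS.
    apply/ffunP => i; rewrite /h' /h ffunE (mem_imset _ _ sinj) inE.
    by rewrite [RHS]F2_01.
  rewrite /h /h'; apply/setP => x; apply/imsetP/idP => [[i]|xR].
    by rewrite inE ffunE; case: (boolP (s i \in R)) => [? _ ->|_]; rewrite ?eqxx.
  have /imsetP[i _ xi] := subsetP RS x xR.
  by exists i; rewrite // inE ffunE -xi xR oner_eq0.
rewrite (eq_bigl predT) => [|c]; last by rewrite inE; apply/subsetP => x /imsetP[i _ ->]; apply: imset_f.
apply: eq_big => // c _; rewrite /= /phi tup0; congr (f (_ + _)).
apply/matrixP => a j; rewrite !mxE summxE.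
transitivity (\sum_(l in h c) M a l).
  rewrite [RHS]big_mkcond /=; apply: eq_bigr => l _; rewrite !mxE.
  by case: (l \in h c); rewrite ?mulr1 ?mulr0.
rewrite big_imset /=; last by move=> x y _ _; apply: sinj.
rewrite big_mkcond /=; apply: eq_bigr => i _; rewrite inE !mxE tupS !mxE.
by rewrite [c i in RHS]F2_01; case: (c i != 0); rewrite ?mul1r ?mul0r.
Qed.

Definition Wm n k (u : {ffun 'I_k.+1 -> vec n}) : 'M['F_2]_(k, n) :=
  \matrix_(i < k) (u (lift ord0 i))^T.

Lemma col_mulmx (R : ringType) m n p j (A : 'M[R]_(m, n)) (B : 'M[R]_(n, p)) :
  col j (A *m B) = A *m col j B.
Proof. by apply/matrixP => a b; rewrite !mxE; apply: eq_bigr => l _; rewrite !mxE. Qed.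

Lemma tup_free n k M v (s : 'I_k -> 'I_n) : M \in unitmx -> injective s ->
  dirs_free (tup M v s).
Proof.
move=> Mu sinj.
rewrite /dirs_free -/(Wm _).
have -> : Wm (tup M v s) = rowsub s 1%:M *m M^T.
  rewrite -rowsubE; apply/matrixP => i j; rewrite !mxE tupS !mxE //.
rewrite /row_free mxrankMfree ?row_free_unit ?unitmx_tr //.
apply: inj_row_free => w H; apply/rowP => i.
have := congr1 (fun m : 'rV_n => m 0 (s i)) H; rewrite !mxE (bigD1 i) //= big1 => [|l li].
  by rewrite !mxE eqxx mulr1 addr0.
by rewrite !mxE (inj_eq sinj) (negPf li) mulr0.
Qed.

Lemma sum_eq1 (T : finType) (Q : pred T) (x : T) :
  (\sum_(u | Q u) ((x == u) : nat) = Q x)%N.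
Proof.
case: (boolP (Q x)) => Qx.
  rewrite (bigD1 x) //= eqxx big1 // => u /andP[_ /negPf]; by rewrite eq_sym => ->.
by rewrite big1 // => u Qu; case: eqP => // xu; move: Qu; rewrite -xu (negPf Qx).
Qed.

Definition gfib n k (s : 'I_k -> 'I_n) (u : {ffun 'I_k.+1 -> vec n}) : nat :=
  \sum_(M : 'M['F_2]_n | M \in unitmx) [forall i, col (s i) M == u (lift ord0 i)].

Lemma fib_v n k (s : 'I_k -> 'I_n) (u : {ffun 'I_k.+1 -> vec n}) M :
  (\sum_(v : vec n) ((tup M v s == u) : nat) = [forall i, col (s i) M == u (lift ord0 i)])%N.
Proof.
rewrite (bigD1 (u ord0)) //= big1 => [|v vne]; last first.
  by case: eqP => // E; move: vne; rewrite -E tup0 eqxx.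
rewrite addn0; congr nat_of_bool; apply/eqP/forallP => [<- i|H].
  by rewrite tupS.
apply/ffunP => j; case: (unliftP ord0 j) => [i ->|->]; first by rewrite tupS (eqP (H i)).
by rewrite tup0.
Qed.

Lemma gfib_const n k (s : 'I_k -> 'I_n) (u u' : {ffun 'I_k.+1 -> vec n}) : (k <= n)%N ->
  dirs_free u -> dirs_free u' -> gfib s u = gfib s u'.
Proof.
move=> kn fu fu'.
have [R Ru E] := free_trans kn fu' fu.
have Eu : forall i, u (lift ord0 i) = R^T *m u' (lift ord0 i).
  move=> i; have := congr1 (row i) E; rewrite row_mul !rowK => H.
  by rewrite -[LHS]trmxK -H trmx_mul trmxK.
have Qu : R^T \in unitmx by rewrite unitmx_tr.
rewrite /gfib (reindex_inj (can_inj (mulKmx Qu))) /=.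
apply: eq_big => M; first by rewrite unitmx_mul Qu.
move=> _; congr nat_of_bool; apply: eq_forallb => i.
rewrite col_mulmx Eu; apply/eqP/eqP => [H|->//].
by rewrite -(mulKmx Qu (col (s i) M)) H mulKmx.
Qed.

Lemma sum_const_set (T : finType) (Q : pred T) (c : nat) :
  (\sum_(u | Q u) c = #|[set u | Q u]| * c)%N.
Proof. by rewrite -sum_nat_const; apply: eq_bigl => u; rewrite inE. Qed.

Lemma fiber_sum n k (s : 'I_k -> 'I_n) (P : pred {ffun 'I_k.+1 -> vec n}) :
  (k <= n)%N -> injective s ->
  (\sum_(M : 'M['F_2]_n | M \in unitmx) \sum_(v : vec n) (P (tup M v s) : nat) =
   #|[set u | dirs_free u && P u]| * gfib s (tup 1%:M 0 s))%N.
Proof.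
move=> kn sinj.
transitivity (\sum_(M : 'M['F_2]_n | M \in unitmx) \sum_(v : vec n)
    \sum_(u | dirs_free u && P u) ((tup M v s == u) : nat))%N.
  apply: eq_bigr => M Mu; apply: eq_bigr => v _.
  by rewrite sum_eq1 tup_free.
under eq_bigr do rewrite exchange_big /=.
rewrite exchange_big /= -sum_const_set; apply: eq_bigr => u /andP[fu _].
rewrite -(gfib_const s kn fu (tup_free 0 (unitmx1 _ _) sinj)).
by apply: eq_bigr => M _; rewrite fib_v.
Qed.

Lemma kderiv_nonfree n k (f : vec n -> 'F_2) (u : {ffun 'I_k.+1 -> vec n}) :
  ~~ dirs_free u -> kderiv f u = 0.
Proof.
rewrite /dirs_free -kermx_eq0 => /rowV0Pn[w /sub_kermxP wW wn0].
have [i0 wi0] : exists i0, w 0 i0 != 0.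
  apply/existsP; apply: contraR wn0 => /existsPn H; apply/eqP/rowP => i.
  by rewrite mxE; move: (H i); rewrite negbK => /eqP.
have sw0 : \sum_(i < k) w 0 i *: u (lift ord0 i) = 0.
  apply/matrixP => a b; rewrite summxE (ord1 b) mxE.
  have := congr1 (fun m : 'rV_n => m 0 a) wW; rewrite !mxE => H; rewrite -[RHS]H.
  by apply: eq_bigr => i _; rewrite !mxE.
pose addw (c : {ffun 'I_k -> 'F_2}) : {ffun 'I_k -> 'F_2} := [ffun i => c i + w 0 i].
have addwK : involutive addw.
  by move=> c; apply/ffunP => i; rewrite !ffunE -addrA -mulr2n -mulr_natr two0 mulr0 addr0.
pose F c := f (\sum_(i < k) c i *: u (lift ord0 i) + u ord0).
have Fw : forall c, F (addw c) = F c.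
  move=> c; rewrite /F; congr (f (_ + _)).
  under eq_bigr do rewrite ffunE scalerDl.
  by rewrite big_split /= sw0 addr0.
rewrite /kderiv -/F (bigID (fun c : {ffun 'I_k -> 'F_2} => c i0 == 0)) /=.
rewrite [X in _ + X](reindex_inj (inv_inj addwK)) /=.
have E2 : \sum_(c | ~~ (addw c i0 == 0)) F (addw c) = \sum_(c : {ffun 'I_k -> 'F_2} | c i0 == 0) F c.
  apply: eq_big => [c|c _]; last exact: Fw.
  rewrite ffunE [w 0 i0]F2_01 wi0 [c i0]F2_01; case: (c i0 != 0) => //=.
by rewrite E2 /F -mulr2n -mulr_natr two0 mulr0.
Qed.

Lemma card_dirs_free n k :
  #|[set u : {ffun 'I_k.+1 -> vec n} | dirs_free u]| =
  (2 ^ n * #|[pred A : 'M['F_2]_(k, n) | \rank A == k]|)%N.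
Proof.
pose g (p : vec n * 'M['F_2]_(k, n)) : {ffun 'I_k.+1 -> vec n} :=
  [ffun j => if unlift ord0 j is Some i then (row i p.2)^T else p.1].
have g0 p : g p ord0 = p.1 by rewrite ffunE unlift_none.
have gS p i : g p (lift ord0 i) = (row i p.2)^T by rewrite ffunE liftK.
have Wg p : Wm (g p) = p.2.
  by apply/matrixP => i j; rewrite mxE gS !mxE.
have ginj : injective g.
  move=> [a A] [b B] E; congr pair; first by have := g0 (a, A); rewrite E g0.
  by have := Wg (a, A); rewrite E Wg.
have -> : [set u | dirs_free u] = g @: setX [set: vec n] [set A | \rank A == k].
  apply/setP => u; rewrite inE; apply/idP/imsetP => [fu|[p]].
    exists (u ord0, Wm u); first by rewrite !inE.
    apply/ffunP => j; case: (unliftP ord0 j) => [i ->|->]; last by rewrite g0.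
    by rewrite gS rowK trmxK.
  by rewrite !inE => /andP[_ rp] ->; rewrite /dirs_free -/(Wm _) Wg.
rewrite card_imset // cardsX cardsT card_mx card_ord muln1.
by congr (_ * _)%N; apply: eq_card => A; rewrite inE.
Qed.

Lemma prod_rat n k : (k <= n)%N ->
  \prod_(i < k) ((2 ^ n)%:R - (2 ^ i)%:R) =
  ((2 ^ n)%:R ^+ k * \prod_(n - k + 1 <= i < n.+1) (1 - 1 / (2 ^ i)%:R) : rat).
Proof.
elim: k => [_|k IH kn]; first by rewrite big_ord0 expr0 mul1r subn0 addn1 big_geq.
rewrite big_ord_recr /= IH ?(ltnW kn) // addn1.
have -> : (n - k.+1 + 1 = n - k)%N by rewrite addn1 subnSK.
rewrite (@big_ltn _ _ _ (n - k)) ?ltnS ?leq_subr // exprS.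
set P := \prod_(_ <= i < _) _.
have E : (2 ^ n = 2 ^ k * 2 ^ (n - k))%N by rewrite -expnD subnKC // ltnW.
rewrite E natrM.
have h1 : (2 ^ k)%:R != 0 :> rat by rewrite pnatr_eq0 expn_eq0.
have h2 : (2 ^ (n - k))%:R != 0 :> rat by rewrite pnatr_eq0 expn_eq0.
move: h1 h2; set a := (2 ^ k)%:R; set b := (2 ^ (n - k))%:R => h1 h2.
field.
by rewrite h2.
Qed.

Definition sS n k (d : 'I_n) (S : {set 'I_n}) (i : 'I_k) : 'I_n := nth d (enum S) i.

Lemma sS_inj n k d (S : {set 'I_n}) : #|S| = k -> injective (@sS n k d S).
Proof.
move=> HS i j /eqP; rewrite /sS nth_uniq ?enum_uniq // -?cardE ?HS //.
by move/eqP; apply: val_inj.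
Qed.

Lemma sS_im n k d (S : {set 'I_n}) : #|S| = k -> [set @sS n k d S i | i : 'I_k] = S.
Proof.
move=> HS; apply/setP => x; apply/imsetP/idP => [[i _ ->]|xS].
  by rewrite /sS -mem_enum mem_nth // -cardE HS.
have ix : (index x (enum S) < k)%N by rewrite -HS cardE index_mem mem_enum.
by exists (Ordinal ix); rewrite // /sS nth_index // mem_enum.
Qed.

Lemma card_set_sum (T : finType) (P Q : pred T) :
  #|[set x | P x && Q x]| = (\sum_(x | P x) (Q x : nat))%N.
Proof.
rewrite -sum1_card (eq_bigl (fun x => P x && Q x)) => [|x]; last by rewrite inE.
by rewrite big_mkcondr /=; apply: eq_bigr => x _; case: (Q x).
Qed.

Unset Implicit Arguments. Set Strict Implicit.

Theorem theorem1 (n k : nat) (hk1 : (1 <= k)%N) (hkn : (k <= n)%N)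
    (f : 'cV['F_2]_n -> 'F_2) :
  dt_k k f = add_k k f * \prod_(n - k + 1 <= i < n.+1) (1 - 1 / (2 ^ i)%:R)
  /\
  add_k k f =
    #|[set u : {ffun 'I_k.+1 -> 'cV['F_2]_n} | dirs_free u && (kderiv f u != 0)]|%:R
    / #|[set u : {ffun 'I_k.+1 -> 'cV['F_2]_n} | dirs_free u]|%:R.
Proof.
have n0 : (0 < n)%N by apply: leq_trans hk1 hkn.
pose d : 'I_n := Ordinal n0.
set A := #|[set u | dirs_free u && (kderiv f u != 0)]|.
set B := #|[set u | dirs_free u]|.
pose G := #|[set M : 'M['F_2]_n | M \in unitmx]|.
have HG : G = (\prod_(i < n) (2 ^ n - 2 ^ i))%N.
  have := card_free ('F_2 : finFieldType) (leqnn n); rewrite card_Fp // => <-; apply: eq_card => M.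
  by rewrite inE -row_free_unit.
have HB : B = (2 ^ n * \prod_(i < k) (2 ^ n - 2 ^ i))%N.
  by rewrite /B card_dirs_free card_free // card_Fp.
have G0 : (0 < G)%N by apply/card_gt0P; exists 1%:M; rewrite inE unitmx1.
have Hdt : dt_k k f = A%:R / (2 ^ (k.+1 * n))%:R.
  rewrite /dt_k /A; congr (_ %:R / _); apply: eq_card => u; rewrite !inE.
  by case: (boolP (dirs_free u)) => // /(kderiv_nonfree f) ->; rewrite eqxx.
pose c (S : {set 'I_n}) := gfib (@sS n k d S) (tup 1%:M 0 (@sS n k d S)).
have HcB : forall S : {set 'I_n}, #|S| = k -> (B * c S = 2 ^ n * G)%N.
  move=> S HS; have := @fiber_sum n k (@sS n k d S) predT hkn (@sS_inj n k d S HS).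
  rewrite (eq_card (B := [set u | dirs_free u])); last by move=> u; rewrite !inE andbT.
  move=> <-; rewrite -/B mulnC -sum_const_set; apply: eq_bigr => M _.
  by rewrite sum1_card card_mx card_ord muln1.
have HA : forall S : {set 'I_n}, #|S| = k ->
    (\sum_(M : 'M['F_2]_n | M \in unitmx) \sum_(v : vec n)
       ((kderiv f (tup M v (@sS n k d S)) != 0%R) : nat) = A * c S)%N.
  by move=> S HS; rewrite (@fiber_sum n k (@sS n k d S) (fun u => kderiv f u != 0) hkn (@sS_inj n k d S HS)).
have Hdd : forall M, forall v : vec n, dd_k k (f \o phi M v) =
    (\sum_(S : {set 'I_n} | #|S| == k)
       ((kderiv f (tup M v (@sS n k d S)) != 0%R) : nat))%:R / ('C(n, k))%:R.
  move=> M v; rewrite /dd_k anfE card_set_sum; congr (_%:R / _).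
  apply: eq_bigr => S /eqP HS; rewrite ffunE -{1}(sS_im d HS) mob_phi //.
  exact: sS_inj.
have Hnum : \sum_(M : 'M['F_2]_n | M \in unitmx) \sum_(v : vec n) dd_k k (f \o phi M v) =
    (\sum_(S : {set 'I_n} | #|S| == k) (A * c S))%:R / ('C(n, k))%:R.
  under eq_bigr do under eq_bigr do rewrite Hdd.
  under eq_bigr do rewrite -mulr_suml.
  rewrite -mulr_suml; congr (_ * _).
  under eq_bigr do rewrite -natr_sum.
  rewrite -natr_sum; congr (_%:R).
  under eq_bigr do rewrite exchange_big /=.
  rewrite exchange_big /=; apply: eq_bigr => S /eqP HS; exact: HA.
have Hden : (2 ^ n)%:R * \prod_(i < n) ((2 ^ n)%:R - (2 ^ i)%:R) = ((2 ^ n * G)%N)%:R :> rat.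
  rewrite natrM HG natr_prod; congr (_ * _); apply: eq_bigr => i _.
  by rewrite natrB // leq_exp2l // ltnW.
have B0 : (0 < B)%N.
  rewrite HB muln_gt0 expn_gt0 /= prodn_gt0 // => i.
  by rewrite subn_gt0 ltn_exp2l // (leq_trans (ltn_ord i) hkn).
have B0' : B%:R != 0 :> rat by rewrite pnatr_eq0 -lt0n.
have C0 : ('C(n, k))%:R != 0 :> rat by rewrite pnatr_eq0 -lt0n bin_gt0.
have Hadd : add_k k f = A%:R / B%:R.
  rewrite /add_k Hnum Hden natr_sum !mulr_suml.
  rewrite (eq_bigr (fun _ => A%:R / B%:R / ('C(n, k))%:R)) => [|S /eqP HS]; last first.
    have cS0 : (c S)%:R != 0 :> rat.
      rewrite pnatr_eq0 -lt0n; have := HcB S HS.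
      case: (c S) => // ; rewrite muln0 => /esym/eqP; rewrite muln_eq0 expn_eq0 /= => /eqP G00; move: G0; rewrite G00.
      done.
    rewrite -(HcB S HS) !natrM.
    by field; apply/and3P; split.
  have -> : \sum_(S : {set 'I_n} | #|S| == k) (A%:R / B%:R / ('C(n, k))%:R : rat) =
     \sum_(S in [set S : {set 'I_n} | #|S| == k]) (A%:R / B%:R / ('C(n, k))%:R).
    by apply: eq_bigl => S; rewrite inE.
  rewrite sumr_const card_draws card_ord -mulr_natr.
  by field; apply/andP; split.
split; last exact: Hadd.
rewrite Hdt Hadd.
have HBq : B%:R = (2 ^ n)%:R * ((2 ^ n)%:R ^+ k *
    \prod_(n - k + 1 <= i < n.+1) (1 - 1 / (2 ^ i)%:R)) :> rat.
  rewrite -prod_rat // HB natrM natr_prod; congr (_ * _); apply: eq_bigr => i _.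
  by rewrite natrB // leq_exp2l // ltnW // (leq_trans (ltn_ord i) hkn).
have -> : (2 ^ (k.+1 * n))%:R = ((2 ^ n)%:R ^+ k.+1 : rat) by rewrite mulnC expnM natrX.
move: B0'; rewrite HBq; set P := \prod_(_ <= i < _) _; set X := (2 ^ n)%:R => B0'.
have X0 : X != 0 by rewrite pnatr_eq0 expn_eq0.
have P0 : P != 0 by move: B0'; rewrite !mulf_eq0 negb_or => /andP[_]; rewrite negb_or => /andP[].
by rewrite exprS; field; rewrite X0 P0 expf_neq0.
Qed.
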